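(* Let $A=\{\mathbf{a}_1,\dots,\mathbf{a}_n\}\subseteq\mathbb{R}^d$ with hidden partition $\mathcal{V}=\{V_1,\dots,V_K\}$, and let $N_1:=\sum_{\alpha=1}^K\binom{n_\alpha}{2}$, $N_2:=\binom{K+1}{2}$. Let $0<\epsilon<1$, $p>1$, $\delta:=(N_1+N_2)^{-p}$, and let $\Pi\in\mathbb{R}^{m\times d}$ be drawn from a DJL distribution $\mathcal{D}_{\epsilon,\delta}$. Let $E_1$ be the event that $(1-\epsilon)\|\mathbf{a}_i-\mathbf{a}_j\|^2\le\|\Pi(\mathbf{a}_i-\mathbf{a}_j)\|^2\le(1+\epsilon)\|\mathbf{a}_i-\mathbf{a}_j\|^2$ for all $\mathbf{a}_i,\mathbf{a}_j\in V_\alpha$, $1\le\alpha\le K$, and $E_2$ the event that $(1-\epsilon)\|\mathbf{a}^{(\alpha)}-\mathbf{a}^{(\beta)}\|^2\le\|\Pi(\mathbf{a}^{(\alpha)}-\mathbf{a}^{(\beta)})\|^2\le(1+\epsilon)\|\mathbf{a}^{(\alpha)}-\mathbf{a}^{(\beta)}\|^2$ for all $1\le\alpha\ne\beta\le K$. Then $\mathbb{P}[E_2\mid E_1]\ge 1-\frac{N_2}{(N_1+N_2)^p-N_1}$. If moreover $N_2\le n/2$ and $\delta=2/n^{p+1}$ (with $\Pi$ drawn from $\mathcal{D}_{\epsilon,\delta}$ for this $\delta$), then $\mathbb{P}[E_2\mid E_1]\ge 1-\frac{1}{n^p-n+1}$.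
   Context: $\|\cdot\|$ is the Euclidean norm. $I_\alpha:=\{i:\mathbf{a}_i\in V_\alpha\}$, $n_\alpha:=|I_\alpha|$, $\mathbf{a}^{(\alpha)}:=\frac{1}{n_\alpha}\sum_{i\in I_\alpha}\mathbf{a}_i$. For $\epsilon\in(0,1)$, $\delta\in(0,1)$, a DJL distribution $\mathcal{D}_{\epsilon,\delta}$ is a probability distribution over matrices $\Pi\in\mathbb{R}^{m\times d}$ such that for every $z\in\mathbb{R}^d$ with $\|z\|=1$, $\mathbb{P}_{\Pi\sim\mathcal{D}_{\epsilon,\delta}}[\,|\|\Pi z\|^2-1|>\epsilon\,]<\delta$. *)

(* Defs.v *)
From HB Require Import structures.
From mathcomp Require Import all_boot all_order all_algebra.
From mathcomp Require Import all_classical all_reals.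
From mathcomp Require Import ereal topology normedtype exp measure lebesgue_measure probability.
Set Implicit Arguments. Unset Strict Implicit. Unset Printing Implicit Defensive.
Import Order.TTheory GRing.Theory Num.Theory.
Local Open Scope ring_scope.
Local Open Scope classical_set_scope.

Definition sqnorm (R : realType) (k : nat) (v : 'cV[R]_k) : R :=
  \sum_(i < k) (v i 0) ^+ 2.

(* index set I_alpha and its size n_alpha, for a labelling lab : 'I_n -> 'I_K
   encoding the hidden partition (a_i \in V_alpha  iff  lab i = alpha) *)
Definition part_size (n K : nat) (lab : 'I_n -> 'I_K) (al : 'I_K) : nat :=
  #|[set i | lab i == al]|.

Definition centroid (R : realType) (d n K : nat) (a : 'I_n -> 'cV[R]_d)
  (lab : 'I_n -> 'I_K) (al : 'I_K) : 'cV[R]_d :=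
  (part_size lab al)%:R^-1 *: \sum_(i < n | lab i == al) a i.

Definition N1 (n K : nat) (lab : 'I_n -> 'I_K) : nat :=
  \sum_(al < K) 'C(part_size lab al, 2).
Definition N2 (K : nat) : nat := 'C(K.+1, 2).

(* Pi : T -> 'M_(m,d) is a random matrix on the probability space (T,P)
   (measurability of w |-> ||Pi w z||^2 for every z) whose law is a DJL
   distribution D_{eps,delta}. *)
Definition isDJL (R : realType) (dT : measure_display) (T : measurableType dT)
  (P : probability T R) (m d : nat) (Pi : T -> 'M[R]_(m, d)) (eps delta : R) : Prop :=
  [/\ 0 < eps < 1, 0 < delta < 1,
      (forall z : 'cV[R]_d, measurable_fun setT (fun w => sqnorm (Pi w *m z)))
    & forall z : 'cV[R]_d, sqnorm z = 1 ->
        (P [set w | (`| sqnorm (Pi w *m z) - 1 | > eps)%R] < delta%:E)%E].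

Definition condprob (R : realType) (dT : measure_display) (T : measurableType dT)
  (P : probability T R) (A B : set T) : R :=
  fine (P (A `&` B)) / fine (P B).

Definition eps_iso (R : realType) (m d : nat) (M : 'M[R]_(m, d)) (eps : R)
  (v : 'cV[R]_d) : Prop :=
  (1 - eps) * sqnorm v <= sqnorm (M *m v) <= (1 + eps) * sqnorm v.

Definition event_E1 (R : realType) (T : Type) (m d n K : nat)
  (a : 'I_n -> 'cV[R]_d) (lab : 'I_n -> 'I_K) (Pi : T -> 'M[R]_(m, d)) (eps : R)
  : set T :=
  [set w | forall i j : 'I_n, lab i = lab j -> eps_iso (Pi w) eps (a i - a j)].

Definition event_E2 (R : realType) (T : Type) (m d n K : nat)
  (a : 'I_n -> 'cV[R]_d) (lab : 'I_n -> 'I_K) (Pi : T -> 'M[R]_(m, d)) (eps : R)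
  : set T :=
  [set w | forall al be : 'I_K, al != be ->
     eps_iso (Pi w) eps (centroid a lab al - centroid a lab be)].

(* Main.v *)
Require Import Defs.
From HB Require Import structures.
From mathcomp Require Import all_boot all_order all_algebra.
From mathcomp Require Import all_classical all_reals.
From mathcomp Require Import ereal topology normedtype exp measure lebesgue_measure probability.
From mathcomp Require Import zify ring lra.
Import Order.TTheory GRing.Theory Num.Theory.
Local Open Scope ring_scope.
Local Open Scope classical_set_scope.
Set Implicit Arguments. Unset Strict Implicit.

Section Mu.
Context (R : realType) (dT : measure_display) (T : measurableType dT) (P : probability T R).
Definition mu (A : set T) : R := fine (P A).

Lemma muE A : measurable A -> P A = (mu A)%:E.
Proof. by move=> mA; rewrite /mu fineK //; apply: fin_num_measure. Qed.

Lemma mu_le A B : measurable A -> measurable B -> A `<=` B -> mu A <= mu B.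
Proof.
move=> mA mB AB; rewrite -lee_fin -!muE //; by apply: le_measure => //; rewrite inE.
Qed.

Lemma muU A B : measurable A -> measurable B -> mu (A `|` B) <= mu A + mu B.
Proof.
move=> mA mB; have mU : measurable (A `|` B) by exact: measurableU.
by rewrite -lee_fin EFinD -!muE //; exact: measureU2.
Qed.

Lemma muC A : measurable A -> mu (~` A) = 1 - mu A.
Proof.
move=> mA; have mC : measurable (~` A) by exact: measurableC.
by apply/eqP; rewrite -eqe EFinB -!muE // probability_setC.
Qed.

Lemma mu_big (I : Type) (r : seq I) (Q : pred I) (F : I -> set T) (b : I -> R) :
  (forall i, Q i -> measurable (F i) /\ mu (F i) <= b i) ->
  measurable (\big[setU/set0]_(i <- r | Q i) F i) /\
  mu (\big[setU/set0]_(i <- r | Q i) F i) <= \sum_(i <- r | Q i) b i.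
Proof.
move=> h; apply: (big_ind2 (fun U s => measurable U /\ mu U <= s)) => //.
- by rewrite /mu measure0.
- move=> U1 s1 U2 s2 [m1 l1] [m2 l2]; split; first exact: measurableU.
  by rewrite (le_trans (@muU U1 U2 m1 m2)) //; exact: lerD.
Qed.
End Mu.

Section Sq.
Context {R : realType}.

Lemma sqnorm_ge0 k (v : 'cV[R]_k) : 0 <= sqnorm v.
Proof. by apply: sumr_ge0 => i _; exact: sqr_ge0. Qed.

Lemma sqnormZ k c (v : 'cV[R]_k) : sqnorm (c *: v) = c ^+ 2 * sqnorm v.
Proof.
rewrite /sqnorm mulr_sumr; apply: eq_bigr => i _; by rewrite mxE exprMn.
Qed.

Lemma sqnormN k (v : 'cV[R]_k) : sqnorm (- v) = sqnorm v.
Proof. by rewrite -scaleN1r sqnormZ sqrrN expr1n mul1r. Qed.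

Lemma sqnorm_eq0 k (v : 'cV[R]_k) : sqnorm v = 0 -> v = 0.
Proof.
move=> /eqP; rewrite psumr_eq0; last by move=> i _; exact: sqr_ge0.
move=> /allP h; apply/matrixP => i j; rewrite ord1 mxE.
have := h i (mem_index_enum _); by rewrite /= sqrf_eq0 => /eqP.
Qed.

Lemma eps_iso0 m d (M : 'M[R]_(m, d)) e : eps_iso M e 0.
Proof. by rewrite /eps_iso mulmx0 /sqnorm !big1 ?mulr0 ?lexx // => i _; rewrite mxE expr0n. Qed.

Lemma eps_isoN m d (M : 'M[R]_(m, d)) e v : eps_iso M e (- v) <-> eps_iso M e v.
Proof. by rewrite /eps_iso mulmxN !sqnormN. Qed.

Lemma not_eps_iso m d (M : 'M[R]_(m, d)) e (v : 'cV[R]_d) : sqnorm v != 0 ->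
  (~ eps_iso M e v) <->
  e < `| sqnorm (M *m ((Num.sqrt (sqnorm v))^-1 *: v)) - 1 |.
Proof.
move=> s0; have sp : 0 < sqnorm v by rewrite lt0r s0 sqnorm_ge0.
rewrite -scalemxAr sqnormZ exprVn sqr_sqrtr ?sqnorm_ge0 //.
rewrite [_^-1 * _]mulrC; set t := sqnorm (M *m v) / sqnorm v.
rewrite /eps_iso -[sqnorm (M *m v)](divfK s0) -/t !ler_pM2r //.
rewrite ltNge ler_distl; split => [h|h]; first by apply/negP.
by move/negP: h.
Qed.
End Sq.

Section Bad.
Context (R : realType) (dT : measure_display) (T : measurableType dT) (P : probability T R).
Context (m d : nat) (Pi : T -> 'M[R]_(m, d)) (e : R).

Definition Bad (v : 'cV[R]_d) := [set w | ~ eps_iso (Pi w) e v].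

Lemma Bad_meas v : (forall z, measurable_fun setT (fun w => sqnorm (Pi w *m z))) ->
  measurable (Bad v).
Proof.
move=> hf.
have hm := hf v measurableT _ (measurable_itv (Interval (BLeft ((1 - e) * sqnorm v)) (BRight ((1 + e) * sqnorm v)))).
suff -> : Bad v = ~` (setT `&` (fun w => sqnorm (Pi w *m v)) @^-1` [set` Interval (BLeft ((1 - e) * sqnorm v)) (BRight ((1 + e) * sqnorm v))]).
  exact: (measurableC hm).
by apply/seteqP; split => w /=; rewrite /Bad /eps_iso /=; [move=> h [_ k]; apply: h; exact: k | move=> h k; apply: h; split => //; exact: k].

Qed.

Lemma Bad_mu v delta : isDJL P Pi e delta -> mu P (Bad v) <= delta.
Proof.
case=> /andP[e0 e1] /andP[d0 d1] hf hD.
have [s0|s0] := eqVneq (sqnorm v) 0.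
  have -> : Bad v = set0.
    apply/seteqP; split => w //=; rewrite (sqnorm_eq0 s0) => h; exfalso; apply: h.
    exact: eps_iso0.
  by rewrite /mu measure0 /= ltW.
set z := (Num.sqrt (sqnorm v))^-1 *: v.
have hz : sqnorm z = 1.
  rewrite sqnormZ exprVn sqr_sqrtr ?sqnorm_ge0 // mulVf //.
have key w : Bad v w <-> e < `| sqnorm (Pi w *m z) - 1 | := not_eps_iso (Pi w) e s0.
have hset : Bad v = [set w | e < `| sqnorm (Pi w *m z) - 1 |].
  by apply/seteqP; split => w /key.
have := hD z hz; rewrite -hset muE; first by rewrite lte_fin => /ltW.
exact: Bad_meas.
Qed.
End Bad.
Lemma cnt_lt k (A : {set 'I_k}) :
  (\sum_(i in A) \sum_(j in A) ((i < j)%N : nat))%N = 'C(#|A|, 2).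
Proof.
set x := (\sum_(i in A) _)%N.
have hy : (\sum_(i in A) \sum_(j in A) ((j < i)%N : nat))%N = x.
  by rewrite /x exchange_big.
have hd : (\sum_(i in A) \sum_(j in A) ((i == j) : nat))%N = #|A|.
  rewrite -sum1_card; apply: eq_bigr => i iA.
  rewrite (bigD1 i) //= eqxx big1 ?addn0 // => j /andP[_ /negbTE]; by rewrite eq_sym => ->.
have htot : (x + x + #|A| = #|A| * #|A|)%N.
  have h1 : (\sum_(i in A) \sum_(j in A) (((i < j)%N : nat) + ((j < i)%N : nat) + ((i == j) : nat)) = #|A| * #|A|)%N.
    rewrite -sum_nat_const; apply: eq_bigr => i iA.
    rewrite -sum1_card; apply: eq_bigr => j jA.
    case: (ltngtP i j) => h /=.
    - by rewrite (_ : (i == j) = false) //; apply/negbTE; rewrite -(inj_eq val_inj) neq_ltn h.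
    - by rewrite (_ : (i == j) = false) //; apply/negbTE; rewrite -(inj_eq val_inj) neq_ltn h orbT.
    - by rewrite (val_inj h) eqxx.
  rewrite -h1 -hd -{2}hy /x -!big_split /=; apply: eq_bigr => i _; by rewrite -!big_split.
rewrite bin2 -[x]doubleK; congr (_./2).
rewrite -addnn; move: htot; case: #|A| => [|n] /=; first by lia.
by rewrite mulSn; lia.
Qed.

Lemma cnt_le k (Q : 'I_k -> 'I_k -> bool) :
  (\sum_(i < k) \sum_(j < k | (i < j)%N && Q i j) 1 <= 'C(k, 2))%N.
Proof.
rewrite -[X in 'C(X, 2)](card_ord k) -cardsT -cnt_lt.
rewrite [X in (_ <= X)%N](eq_bigl xpredT); last by move=> i; rewrite inE.
apply: leq_sum => i _.
rewrite [X in (_ <= X)%N](eq_bigl xpredT); last by move=> j; rewrite inE.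
rewrite big_mkcond [X in (_ <= X)%N]big_mkcond /=; apply: leq_sum => j _.
by case: (i < j)%N; case: (Q i j).
Qed.

Lemma cnt_N1 n K (lab : 'I_n -> 'I_K) :
  (\sum_(i < n) \sum_(j < n | (i < j)%N && (lab i == lab j)) 1)%N = N1 lab.
Proof.
rewrite /N1 [LHS](partition_big lab xpredT) //=; apply: eq_bigr => al _.
have -> : part_size lab al = #|[set i | lab i == al]%SET|.
  apply: eq_card => i; rewrite !inE /in_set /=; exact: asboolb.
rewrite -(cnt_lt [set i | lab i == al]%SET); apply: eq_big => [i|i /eqP hi]; first by rewrite inE.
rewrite big_mkcond [RHS]big_mkcond /=; apply: eq_bigr => j _.
rewrite inE hi eq_sym; by case: (lab j == al); case: (i < j)%N.
Qed.
Lemma arith (R : realType) (dl c1 c2 A B q p1 : R) : 0 < dl -> 0 <= c2 -> c1 <= A -> c2 <= B ->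
  0 < 1 - A * dl -> 1 - c1 * dl <= p1 -> p1 <= q + c2 * dl ->
  1 - B * dl / (1 - A * dl) <= q / p1.
Proof.
move=> d0 c20 h1 h2 hB hp hq.
have e1 : c1 * dl <= A * dl by rewrite ler_pM2r.
have e2 : c2 * dl <= B * dl by rewrite ler_pM2r.
have hp' : 1 - A * dl <= p1 by lra.
have p0 : 0 < p1 by lra.
rewrite ler_pdivlMr //.
set r := B * dl / (1 - A * dl).
have hr : r * (1 - A * dl) = B * dl by rewrite /r divfK // gt_eqF.
have r0 : 0 <= r.
  by rewrite /r divr_ge0 ?(ltW hB) // mulr_ge0 // ?(ltW d0) // (le_trans c20).
have : r * (1 - A * dl) <= r * p1 by exact: ler_wpM2l.
nra.
Qed.

Lemma cnt_rec n : ('C(n, 2) * 2 = n * n.-1)%N.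
Proof.
elim: n => [|n IH] //; rewrite binS bin1 mulnDl IH; case: n {IH} => //= n; lia.
Qed.

Section Main.
Context {R : realType} {dT : measure_display} {T : measurableType dT} (P : probability T R).

Lemma bigU_mem (I : finType) (Q : pred I) (F : I -> set T) x :
  (\big[setU/set0]_(i | Q i) F i) x <-> exists i, Q i /\ F i x.
Proof.
split.
  apply: (big_ind (fun S : set T => S x -> exists i, Q i /\ F i x)) => //.
  - by move=> S1 S2 h1 h2 [/h1|/h2].
  - by move=> i qi fx; exists i.
by case=> i [qi fx]; rewrite (bigD1 i) //; left.
Qed.

Lemma union_bound (I : finType) (Q : I -> I -> bool) (F : I -> I -> set T) dl :
  (forall i j, measurable (F i j) /\ mu P (F i j) <= dl) ->
  measurable (\big[setU/set0]_i \big[setU/set0]_(j | Q i j) F i j) /\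
  mu P (\big[setU/set0]_i \big[setU/set0]_(j | Q i j) F i j)
    <= ((\sum_i \sum_(j | Q i j) 1)%N)%:R * dl.
Proof.
move=> h.
have -> : (((\sum_i \sum_(j | Q i j) 1)%N)%:R * dl = \sum_i \sum_(j | Q i j) dl).
  rewrite natr_sum mulr_suml; apply: eq_bigr => i _; rewrite natr_sum mulr_suml.
  by apply: eq_bigr => j _; rewrite mul1r.
apply: mu_big => i _; apply: mu_big => j _; exact: h.
Qed.

Lemma core m d n K (a : 'I_n -> 'cV[R]_d) (lab : 'I_n -> 'I_K)
  (Pi : T -> 'M[R]_(m, d)) e dl :
  isDJL P Pi e dl ->
  1 - ((\sum_(i < n) \sum_(j < n | (i < j)%N && (lab i == lab j)) 1)%N)%:R * dl
    <= mu P (event_E1 a lab Pi e) /\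
  mu P (event_E1 a lab Pi e) <= mu P (event_E2 a lab Pi e `&` event_E1 a lab Pi e)
    + ((\sum_(i < K) \sum_(j < K | (i < j)%N && true) 1)%N)%:R * dl.
Proof.
move=> hD; have [_ _ hf _] := hD.
set U1 := \big[setU/set0]_(i < n) \big[setU/set0]_(j < n | (i < j)%N && (lab i == lab j))
   Bad Pi e (a i - a j).
set U2 := \big[setU/set0]_(i < K) \big[setU/set0]_(j < K | (i < j)%N && true)
   Bad Pi e (centroid a lab i - centroid a lab j).
have [mU1 hU1] := @union_bound _ (fun i j : 'I_n => (i < j)%N && (lab i == lab j)) _ _
   (fun i j => conj (Bad_meas e (a i - a j) hf) (Bad_mu (a i - a j) hD)).
have [mU2 hU2] := @union_bound _ (fun i j : 'I_K => (i < j)%N && true) _ _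
   (fun i j => conj (Bad_meas e (centroid a lab i - centroid a lab j) hf)
                    (Bad_mu (centroid a lab i - centroid a lab j) hD)).
have E1eq : event_E1 a lab Pi e = ~` U1.
  apply/seteqP; split => w /=.
  - move=> hE /bigU_mem [i [_ /bigU_mem [j [/andP [_ /eqP hl] hb]]]]; exact: hb (hE i j hl).
  - move=> hn i j hl; case: (ltngtP i j) => h.
    + apply: contrapT => hb; apply: hn; apply/bigU_mem; exists i; split => //.
      by apply/bigU_mem; exists j; rewrite h hl eqxx.
    + apply/eps_isoN; rewrite opprB; apply: contrapT => hb; apply: hn.
      by apply/bigU_mem; exists j; split => //; apply/bigU_mem; exists i; rewrite h hl eqxx.
    + by rewrite (val_inj h) subrr; exact: eps_iso0.
have E2eq : event_E2 a lab Pi e = ~` U2.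
  apply/seteqP; split => w /=.
  - move=> hE /bigU_mem [i [_ /bigU_mem [j [/andP [hl _] hb]]]]; apply: hb; apply: hE.
    by apply/eqP => hij; rewrite hij ltnn in hl.
  - move=> hn al be hne; case: (ltngtP al be) => h.
    + apply: contrapT => hb; apply: hn; apply/bigU_mem; exists al; split => //.
      by apply/bigU_mem; exists be; rewrite h.
    + apply/eps_isoN; rewrite opprB; apply: contrapT => hb; apply: hn.
      by apply/bigU_mem; exists be; split => //; apply/bigU_mem; exists al; rewrite h.
    + by rewrite (val_inj h) eqxx in hne.
have mE1 : measurable (event_E1 a lab Pi e) by rewrite E1eq; exact: measurableC.
have mE2 : measurable (event_E2 a lab Pi e) by rewrite E2eq; exact: measurableC.
have mI : measurable (event_E2 a lab Pi e `&` event_E1 a lab Pi e) by exact: measurableI.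
split.
  by rewrite E1eq muC //; lra.
have sub : event_E1 a lab Pi e `<=` (event_E2 a lab Pi e `&` event_E1 a lab Pi e) `|` U2.
  move=> w hw; have [h|h] := pselect (event_E2 a lab Pi e w); first by left.
  by right; rewrite E2eq in h; apply: contrapT.
have mIU : measurable ((event_E2 a lab Pi e `&` event_E1 a lab Pi e) `|` U2) by exact: measurableU.
have h1 := mu_le P mE1 mIU sub.
have h2 := muU P mI mU2.
lra.
Qed.
End Main.

Unset Implicit Arguments.

Theorem proposition7 (R : realType) (dT : measure_display) (T : measurableType dT)
  (P : probability T R) (m d n K : nat) (a : 'I_n -> 'cV[R]_d)
  (lab : 'I_n -> 'I_K) (eps p : R) :
  (0 < K)%N -> (forall al : 'I_K, exists i : 'I_n, lab i = al) ->
  0 < eps < 1 -> 1 < p ->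
  (forall Pi : T -> 'M[R]_(m, d),
     isDJL P Pi eps (((N1 lab + N2 K)%N)%:R `^ (- p)) ->
     condprob P (event_E2 a lab Pi eps) (event_E1 a lab Pi eps)
       >= 1 - (N2 K)%:R / (((N1 lab + N2 K)%N)%:R `^ p - (N1 lab)%:R))
  /\
  ((N2 K)%:R <= n%:R / 2 :> R ->
   forall Pi : T -> 'M[R]_(m, d),
     isDJL P Pi eps (2 / n%:R `^ (p + 1)) ->
     condprob P (event_E2 a lab Pi eps) (event_E1 a lab Pi eps)
       >= 1 - 1 / (n%:R `^ p - n%:R + 1)).
Proof.
move=> K0 hsurj /andP[e0 e1] p1.
have n0 : (0 < n)%N.
  by have [i _] := hsurj (Ordinal K0); exact: (leq_ltn_trans (leq0n i) (ltn_ord i)).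
set c1 := (\sum_(i < n) \sum_(j < n | (i < j)%N && (lab i == lab j)) 1)%N.
set c2 := (\sum_(i < K) \sum_(j < K | (i < j)%N && true) 1)%N.
have hc1N : (c1 <= N1 lab)%N by rewrite /c1 cnt_N1.
have hc1n : (c1 <= 'C(n, 2))%N := cnt_le _.
have hc2 : (c2 <= 'C(K, 2))%N := cnt_le _.
have hN2 : N2 K = ('C(K, 2) + K)%N by rewrite /N2 binS bin1.
have c20 : 0 <= c2%:R :> R by [].
split.
- move=> Pi hD; have [_ /andP[d0 d1] _ _] := hD.
  have [hl hq] := core a lab hD.
  rewrite -/c1 -/c2 in hl hq.
  set X := ((N1 lab + N2 K)%N)%:R : R.
  set Y := X `^ p.
  have X1 : 1 <= X by rewrite /X ler1n; lia.
  have XY : X <= Y by rewrite /Y -{1}(powRr1 (le_trans ler01 X1)); apply: ler_powR => //; lra.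
  have hlt : (N1 lab)%:R < X by rewrite /X ltr_nat; lia.
  have Y0 : 0 < Y by lra.
  have dlE : X `^ (- p) = Y^-1 by rewrite powRN.
  rewrite dlE in hl hq d0.
  have pos : 0 < 1 - (N1 lab)%:R * Y^-1.
    have -> : 1 - (N1 lab)%:R * Y^-1 = (Y - (N1 lab)%:R) / Y by field; lra.
    by apply: divr_gt0; lra.
  have h1 : c1%:R <= (N1 lab)%:R :> R by rewrite ler_nat.
  have h2 : c2%:R <= (N2 K)%:R :> R by rewrite ler_nat hN2; exact: leq_trans hc2 (leq_addr _ _).
  have := arith d0 c20 h1 h2 pos hl hq.
  rewrite /condprob -/(mu P _).
  have -> : (N2 K)%:R * Y^-1 / (1 - (N1 lab)%:R * Y^-1) = (N2 K)%:R / (Y - (N1 lab)%:R).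
    by field; apply/andP; split; apply/eqP; lra.
  by [].
- move=> hN Pi hD; have [_ /andP[d0 d1] _ _] := hD.
  have [hl hq] := core a lab hD.
  rewrite -/c1 -/c2 in hl hq.
  set nr := n%:R : R.
  set Y := nr `^ p.
  have n1 : 1 <= nr by rewrite /nr ler1n.
  have nY : nr <= Y by rewrite /Y -{1}(powRr1 (le_trans ler01 n1)); apply: ler_powR => //; lra.
  have Y0 : 0 < Y by lra.
  have dlE : 2 / nr `^ (p + 1) = 2 / (Y * nr).
    rewrite powRD ?powRr1 //; first lra.
  rewrite dlE in hl hq d0.
  have Cn : ('C(n, 2))%:R = nr * (nr - 1) / 2 :> R.
    have := congr1 (fun x => x%:R : R) (cnt_rec n); rewrite /= !natrM -subn1 natrB // => h.
    by rewrite -/nr in h; rewrite -h; field.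
  have h1 : c1%:R <= (nr * (nr - 1) / 2) by rewrite -Cn ler_nat.
  have h2 : c2%:R <= nr / 2.
    apply: le_trans hN; rewrite ler_nat hN2; exact: leq_trans hc2 (leq_addr _ _).
  have pos : 0 < 1 - nr * (nr - 1) / 2 * (2 / (Y * nr)).
    have -> : 1 - nr * (nr - 1) / 2 * (2 / (Y * nr)) = (Y - nr + 1) / Y.
      by field; apply/andP; split; apply/eqP; lra.
    by apply: divr_gt0; lra.
  have := arith d0 c20 h1 h2 pos hl hq.
  rewrite /condprob -/(mu P _).
  have -> : nr / 2 * (2 / (Y * nr)) / (1 - nr * (nr - 1) / 2 * (2 / (Y * nr))) = 1 / (Y - nr + 1).
    by field; apply/and3P; split; apply/eqP; lra.
  by [].
Qed.
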